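(* Let $F$ be a finite field of characteristic $3$. Let $k\ge 0$ be an integer, $m=3k+1$, and $t$ an integer with $t^3\equiv 1\pmod m$ and $\gcd(m,t-1)=1$. Let $G=T_{3m}=\langle x,y\mid x^m=y^3=1,\ y^{-1}xy=x^t\rangle$ (of order $3m$), $FG$ its group algebra, and $H=\langle x\rangle$. Then $\Delta(G)=J(FG)\oplus\Delta(G,H)$.
   Context: $J(FG)$ is the Jacobson radical of $FG$. $\Delta(G)$ is the augmentation ideal of $FG$, i.e. the ideal generated by $\{g-1\mid g\in G\}$, and $\Delta(G,H)$ is the ideal of $FG$ generated by $\{h-1\mid h\in H\}$ (with $H=\langle x\rangle$ normal in $G$). The sum is a direct sum of $F$-subspaces. *)

(* Defs.v *)
From HB Require Import structures.
From mathcomp Require Import all_boot all_algebra all_fingroup all_field.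
Set Implicit Arguments. Unset Strict Implicit. Unset Printing Implicit Defensive.
Import GRing.Theory.
Local Open Scope ring_scope.

(* The group algebra F G of the finite group G = [set: gT], realized as
   F-valued functions on gT; addition is pointwise, multiplication is
   convolution: (a * b)(g) = \sum_h a(h) b(h^-1 g). *)
Section GroupAlgebra.
Variables (F : finFieldType) (gT : finGroupType).

Definition galg := {ffun gT -> F}.

Definition gmul (a b : galg) : galg :=
  [ffun g => \sum_(h : gT) a h * b (h^-1 * g)%g].

Definition gelt (g : gT) : galg := [ffun h => (h == g)%:R].
Definition gone : galg := gelt 1%g.

Definition is_left_ideal (I : {set galg}) : Prop :=
  0 \in I /\ (forall a b, a \in I -> b \in I -> a + b \in I) /\
  (forall r a, a \in I -> gmul r a \in I).

Definition is_ideal (I : {set galg}) : Prop :=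
  is_left_ideal I /\ (forall r a, a \in I -> gmul a r \in I).

Definition is_maximal_left_ideal (I : {set galg}) : Prop :=
  is_left_ideal I /\ I != [set: galg] /\
  (forall I' : {set galg}, is_left_ideal I' -> I \subset I' ->
     I' = I \/ I' = [set: galg]).

Definition in_jacobson (a : galg) : Prop :=
  forall I, is_maximal_left_ideal I -> a \in I.

Definition in_ideal_gen (S : {set galg}) (a : galg) : Prop :=
  forall I, is_ideal I -> S \subset I -> a \in I.

Definition in_aug_ideal_rel (H : {set gT}) (a : galg) : Prop :=
  in_ideal_gen [set gelt h - gone | h in H] a.

Definition in_aug_ideal (a : galg) : Prop := in_aug_ideal_rel [set: gT] a.

End GroupAlgebra.

(* Main.v *)
Require Import Defs.
From HB Require Import structures.
From mathcomp Require Import all_boot all_algebra all_fingroup all_field.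
From mathcomp Require Import all_solvable.
From Stdlib Require Classical_Prop.
Import GRing.Theory.
Local Open Scope ring_scope.
Set Implicit Arguments. Unset Strict Implicit. Unset Printing Implicit Defensive.

Section S. Variables (F : finFieldType) (gT : finGroupType).
Definition GA : Type := {ffun gT -> F^o}.
HB.instance Definition _ := GRing.Lmodule.copy GA {ffun gT -> F^o}.
HB.instance Definition _ := Vector.copy GA {ffun gT -> F^o}.
HB.instance Definition _ := Finite.copy GA {ffun gT -> F^o}.

Definition gaM (a b : GA) : GA := gmul a b.
Definition ga1 : GA := gone F gT.

Lemma gaME a b g : gaM a b g = \sum_h a h * b (h^-1 * g)%g.
Proof. by rewrite /gaM /gmul ffunE. Qed.

Lemma ga1E g : ga1 g = (g == 1%g)%:R.
Proof. by rewrite /ga1 /gone /gelt ffunE. Qed.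

Lemma gaMA : associative gaM.
Proof.
move=> a b c; apply/ffunP=> g; rewrite !gaME.
under eq_bigr do rewrite gaME mulr_sumr.
under [RHS]eq_bigr do rewrite gaME mulr_suml.
rewrite [RHS]exchange_big /=; apply: eq_bigr => k _.
rewrite [RHS](reindex_inj (mulgI k)) /=; apply: eq_bigr => h _.
by rewrite mulrA mulKg invMg mulgA.
Qed.

Lemma ga1M : left_id ga1 gaM.
Proof.
move=> a; apply/ffunP=> g; rewrite gaME (bigD1 1%g) //= ga1E eqxx mul1r invg1 mul1g.
rewrite big1 ?addr0 // => h /negbTE nh; by rewrite ga1E nh mul0r.
Qed.

Lemma gaM1 : right_id ga1 gaM.
Proof.
move=> a; apply/ffunP=> g; rewrite gaME (bigD1 g) //= ga1E mulVg eqxx mulr1.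
rewrite big1 ?addr0 // => h nh; rewrite ga1E.
case: eqP => [e|]; last by rewrite mulr0.
by move: nh; rewrite -(mulKVg h g) e mulg1 eqxx.
Qed.

Lemma gaMDl : left_distributive gaM +%R.
Proof.
move=> a b c; apply/ffunP=> g; rewrite [in RHS]ffunE !gaME -big_split /=.
by apply: eq_bigr => h _; rewrite ffunE mulrDl.
Qed.

Lemma gaMDr : right_distributive gaM +%R.
Proof.
move=> a b c; apply/ffunP=> g; rewrite [in RHS]ffunE !gaME -big_split /=.
by apply: eq_bigr => h _; rewrite ffunE mulrDr.
Qed.

Lemma ga1_neq0 : ga1 != 0.
Proof. apply/eqP => /ffunP /(_ 1%g); rewrite ga1E ffunE eqxx; apply/eqP; exact: oner_neq0. Qed.

HB.instance Definition _ := GRing.Zmodule_isNzRing.Build GA gaMA ga1M gaM1 gaMDl gaMDr ga1_neq0.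

Lemma gaZl (c : F) (u v : GA) : c *: (u * v) = (c *: u) * v.
Proof.
apply/ffunP=> g; rewrite [LHS]ffunE /GRing.mul /= !gaME.
rewrite -[LHS]/(c * _) mulr_sumr; apply: eq_bigr => h _.
by rewrite ffunE mulrA.
Qed.
HB.instance Definition _ := GRing.Lmodule_isLalgebra.Build F GA gaZl.

Lemma gaZr (c : F) (u v : GA) : c *: (u * v) = u * (c *: v).
Proof.
apply/ffunP=> g; rewrite [LHS]ffunE /GRing.mul /= !gaME.
rewrite -[LHS]/(c * _) mulr_sumr; apply: eq_bigr => h _.
by rewrite ffunE mulrCA.
Qed.
HB.instance Definition _ := GRing.Lalgebra_isAlgebra.Build F GA gaZr.

End S.
Section Grp.
Local Close Scope ring_scope.
Variables (gT : finGroupType) (k t : nat) (x y : gT).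
Hypothesis cop : coprime (3 * k + 1) (t - 1).
Hypothesis gen : <<[set x; y]>>%g = [set: gT].
Hypothesis xm : (x ^+ (3 * k + 1))%g = 1%g.
Hypothesis y3 : (y ^+ 3)%g = 1%g.
Hypothesis xy : (x ^ y)%g = (x ^+ t)%g.
Local Open Scope group_scope.

Lemma n_dvd : (#[x] %| 3 * k + 1)%N.
Proof. by rewrite order_dvdn xm. Qed.

Lemma yN : y \in 'N(<[x]>).
Proof.
rewrite inE -cycleJ xy cycle_subG; exact: mem_cycle.
Qed.

Lemma GN g : g \in 'N(<[x]>).
Proof.
have: [set: gT] \subset 'N(<[x]>).
  rewrite -gen gen_subG subUset !sub1set yN andbT.
  exact: (subsetP (normG _)) (cycle_id x).
by move/subsetP; apply; rewrite inE.
Qed.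

Lemma Gdec g : exists h j, h \in <[x]> /\ g = h * y ^+ j.
Proof.
have: g \in <[x]> * <[y]>.
  rewrite -norm_joinEr; last by rewrite cycle_subG yN.
  have: [set: gT] \subset <[x]> <*> <[y]>.
    rewrite -gen gen_subG subUset !sub1set.
    rewrite (subsetP (joing_subl _ _)) ?cycle_id //.
    by rewrite (subsetP (joing_subr _ _)) ?cycle_id.
  by move/subsetP; apply; rewrite inE.
case/mulsgP=> h u hH /cycleP[j ->] ->; by exists h, j.
Qed.

Lemma fpf h : h \in <[x]> -> h ^ y = h -> h = 1.
Proof.
case/cycleP=> i ->; rewrite conjXg xy -expgM.
move/eqP; rewrite eq_expg_mod_order.
have nd := n_dvd.
case: t cop => [|t'] cop'.
  rewrite /coprime gcdn0 in cop'.
  move: nd; rewrite (eqP cop') dvdn1 => /eqP o1 _.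
  have x1 : x = 1 by rewrite -[x]expg1 -o1 expg_order.
  by rewrite x1 expg1n.
move=> E; have: (#[x] %| t'.+1 * i - i)%N.
  by rewrite -eqn_mod_dvd ?leq_pmull.
rewrite -{2}(mul1n i) -mulnBl subn1 /= Gauss_dvdr; last first.
  by apply: coprime_dvdl nd _; rewrite subn1 in cop'.
by rewrite order_dvdn => /eqP.
Qed.

Lemma fpfu u h : u \in <[y]> -> h \in <[x]> -> h ^ u = h -> h != 1 -> u = 1.
Proof.
move=> /cycleP[j ->] hH hu nh1.
have yj : (y ^+ j = y ^+ (j %% 3)).
  by rewrite {1}(divn_eq j 3) expgD mulnC expgM y3 expg1n mul1g.
rewrite yj in hu *.
have: (j %% 3 < 3)%N by rewrite ltn_mod.
case: (j %% 3) hu => [|[|[|//]]] hu _ //.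
  by rewrite expg1 in hu; move: nh1; rewrite (fpf hH hu) eqxx.
have hy : h ^ y = h.
  have: h ^ (y ^+ 2 * y ^+ 2) = h by rewrite conjgM hu hu.
  by rewrite -expgD -[(2+2)%N]/(1+3)%N expgD y3 mulg1 expg1.
by move: nh1; rewrite (fpf hH hy) eqxx.
Qed.

End Grp.

Section Basic.
Variables (F : finFieldType) (gT : finGroupType).
Local Notation GA := (GA F gT).

Definition ge (g : gT) : GA := gelt F g.

Lemma geE g h : ge g h = (h == g)%:R.
Proof. by rewrite /ge /gelt ffunE. Qed.

Lemma ge1 : ge 1%g = 1.
Proof. by []. Qed.

Lemma mulE (a b : GA) g : (a * b) g = \sum_h a h * b (h^-1 * g)%g.
Proof. exact: gaME. Qed.

Lemma geMl g (a : GA) h : (ge g * a) h = a (g^-1 * h)%g.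
Proof.
rewrite mulE (bigD1 g) //= geE eqxx mul1r big1 ?addr0 // => u /negbTE nu.
by rewrite geE nu mul0r.
Qed.

Lemma geM g h : ge g * ge h = ge (g * h)%g.
Proof.
apply/ffunP => u; rewrite geMl !geE; congr ((nat_of_bool _)%:R).
by apply/eqP/eqP => E; [rewrite -E mulKVg | rewrite E mulKg].
Qed.

Lemma geX g j : ge g ^+ j = ge (g ^+ j)%g.
Proof. elim: j => [|j IH]; first by rewrite expr0 expg0. by rewrite exprS IH geM expgS. Qed.

Lemma scaleE c (a : GA) g : (c *: a) g = c * a g.
Proof. exact: ffunE. Qed.
Lemma addE (a b : GA) g : (a + b) g = a g + b g.
Proof. exact: ffunE. Qed.
Lemma oppE (a : GA) g : (- a) g = - a g.
Proof. exact: ffunE. Qed.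
Lemma zeroE g : (0 : GA) g = 0.
Proof. exact: ffunE. Qed.
Lemma sumE (I : Type) (r : seq I) (P : pred I) (f : I -> GA) g :
  (\sum_(i <- r | P i) f i) g = \sum_(i <- r | P i) f i g.
Proof. exact: sum_ffunE. Qed.

Lemma gaexp (a : GA) : a = \sum_g a g *: ge g.
Proof.
apply/ffunP => h; rewrite sumE (bigD1 h) //= big1 => [|u nu].
  by rewrite scaleE geE eqxx mulr1 addr0.
by rewrite scaleE geE eq_sym (negbTE nu) mulr0.
Qed.

Definition aug (a : GA) : F := \sum_g a g.

Lemma augD a b : aug (a + b) = aug a + aug b.
Proof. by rewrite /aug -big_split; apply: eq_bigr => g _; rewrite addE. Qed.
Lemma augZ c a : aug (c *: a) = c * aug a.
Proof. by rewrite /aug mulr_sumr; apply: eq_bigr => g _; rewrite scaleE. Qed.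
Lemma augN a : aug (- a) = - aug a.
Proof. by rewrite -scaleN1r augZ mulN1r. Qed.
Lemma augB a b : aug (a - b) = aug a - aug b.
Proof. by rewrite augD augN. Qed.
Lemma aug0 : aug 0 = 0.
Proof. by rewrite -(scale0r (0 : GA)) augZ mul0r. Qed.
Lemma aug_ge g : aug (ge g) = 1.
Proof.
rewrite /aug (bigD1 g) //= geE eqxx big1 ?addr0 // => h /negbTE nh.
by rewrite geE nh.
Qed.
Lemma aug1 : aug 1 = 1.
Proof. by rewrite -ge1 aug_ge. Qed.
Lemma aug_sum (I : Type) (r : seq I) (P : pred I) (f : I -> GA) :
  aug (\sum_(i <- r | P i) f i) = \sum_(i <- r | P i) aug (f i).
Proof. exact: (big_morph aug augD aug0). Qed.
Lemma augM a b : aug (a * b) = aug a * aug b.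
Proof.
rewrite {1}(gaexp a) mulr_suml aug_sum [in RHS]/aug mulr_suml; apply: eq_bigr => g _.
rewrite -scalerAl augZ; congr (_ * _).
rewrite /aug (reindex_inj (mulgI g)) /=; apply: eq_bigr => h _.
by rewrite geMl mulKg.
Qed.

Lemma lid0 (I : {set galg F gT}) : is_left_ideal I -> (0 : GA) \in I.
Proof. by case. Qed.
Lemma lidD (I : {set galg F gT}) (a b : GA) : is_left_ideal I -> a \in I -> b \in I -> a + b \in I.
Proof. by case=> _ [h _]; apply: h. Qed.
Lemma lidM (I : {set galg F gT}) (r a : GA) : is_left_ideal I -> a \in I -> r * a \in I.
Proof. by case=> _ [_ h]; apply: h. Qed.
Lemma lidZ (I : {set galg F gT}) c (a : GA) : is_left_ideal I -> a \in I -> c *: a \in I.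
Proof. by move=> hI aI; rewrite -[a]mul1r scalerAl; apply: lidM. Qed.
Lemma lidN (I : {set galg F gT}) (a : GA) : is_left_ideal I -> a \in I -> - a \in I.
Proof. by move=> hI aI; rewrite -scaleN1r; apply: lidZ. Qed.
Lemma lidB (I : {set galg F gT}) (a b : GA) : is_left_ideal I -> a \in I -> b \in I -> a - b \in I.
Proof. by move=> hI aI bI; apply: lidD => //; apply: lidN. Qed.
Lemma lid_sum (I : {set galg F gT}) (J : Type) (r : seq J) (P : pred J) (f : J -> GA) :
  is_left_ideal I -> (forall j, P j -> f j \in I) -> \sum_(j <- r | P j) f j \in I.
Proof. move=> hI hf; apply: (big_ind (fun v : GA => v \in I)) => //; [exact: lid0 hI | move=> u v; exact: lidD]. Qed.
Lemma lid1 (I : {set galg F gT}) : is_left_ideal I -> (1 : GA) \in I -> I = [set: galg F gT].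
Proof.
move=> hI h1; apply/setP => a; rewrite inE.
by have := @lidM I a 1 hI h1; rewrite mulr1.
Qed.

End Basic.

Section Main.
Variables (F : finFieldType) (gT : finGroupType) (k t : nat) (x y : gT).
Hypothesis pc : 3%N \in [pchar F].
Hypothesis cop : coprime (3 * k + 1) (t - 1).
Hypothesis gen : <<[set x; y]>>%g = [set: gT].
Hypothesis xm : (x ^+ (3 * k + 1))%g = 1%g.
Hypothesis y3 : (y ^+ 3)%g = 1%g.
Hypothesis xy : (x ^ y)%g = (x ^+ t)%g.
Local Notation GA := (GA F gT).
Local Notation ge := (@ge F gT).
Local Notation n := #[x]%g.
Local Notation H := <[x]>%g.

Definition eH : GA := \sum_(h in H) ge h.
Definition e : GA := (n%:R : F)^-1 *: eH.

Lemma nF : (n%:R : F) != 0.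
Proof.
rewrite -(dvdn_pcharf pc); apply/negP => d3.
have := dvdn_trans d3 (n_dvd xm).
by rewrite dvdn_addr ?dvdn_mulr.
Qed.

Lemma eH_e : eH = (n%:R : F) *: e.
Proof. by rewrite /e scalerA divff ?nF // scale1r. Qed.

Lemma geH_eH h : h \in H -> ge h * eH = eH.
Proof.
move=> hH; rewrite /eH mulr_sumr [RHS](reindex_inj (mulgI h)) /=.
by apply: eq_big => [u|u _]; [rewrite groupMl | rewrite geM].
Qed.

Lemma eH_geH h : h \in H -> eH * ge h = eH.
Proof.
move=> hH; rewrite /eH mulr_suml [RHS](reindex_inj (mulIg h)) /=.
by apply: eq_big => [u|u _]; [rewrite groupMr | rewrite geM].
Qed.

Lemma geH_e h : h \in H -> ge h * e = e.
Proof. by move=> hH; rewrite /e -scalerAr geH_eH. Qed.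

Lemma e_geH h : h \in H -> e * ge h = e.
Proof. by move=> hH; rewrite /e -scalerAl eH_geH. Qed.

Lemma ge_eH g : ge g * eH = eH * ge g.
Proof.
rewrite /eH mulr_sumr mulr_suml (reindex_inj (conjg_inj g)) /=.
apply: eq_big => [u|u _]; first by rewrite memJ_norm // (GN gen xy).
by rewrite !geM conjgE !mulgA mulgV mul1g.
Qed.

Lemma ge_e g : ge g * e = e * ge g.
Proof. by rewrite /e -scalerAl -scalerAr ge_eH. Qed.

Lemma e_central (a : GA) : e * a = a * e.
Proof.
rewrite {1 2}(gaexp a) mulr_sumr mulr_suml; apply: eq_bigr => g _.
by rewrite -(@scalerAr F GA (a g) e (ge g)) -(@scalerAl F GA (a g) (ge g) e) ge_e.
Qed.

Lemma ee : e * e = e.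
Proof.
rewrite {2}/e -scalerAr /eH mulr_sumr.
rewrite (eq_bigr (fun _ => e)) => [|h hH]; last exact: e_geH.
by rewrite sumr_const -scaler_nat scalerA mulVf ?nF // scale1r.
Qed.

Lemma aug_e : aug e = 1.
Proof.
rewrite /e augZ /eH aug_sum (eq_bigr (fun _ => 1)) => [|h _]; last exact: aug_ge.
by rewrite sumr_const mulVf // nF.
Qed.

Lemma relE (c : GA) : in_aug_ideal_rel H c <-> c * e = 0.
Proof.
split.
  move=> hc.
  have: c \in [set a : galg F gT | (a : GA) * e == 0].
    apply: hc.
      split; first split.
      - by rewrite inE mul0r.
      split.
      - move=> a b; rewrite !inE => /eqP ha /eqP hb.
        by rewrite -[a + b]/((a : GA) + b) mulrDl ha hb addr0.
      - move=> r a; rewrite !inE => /eqP ha.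
        by rewrite -[gmul r a]/((r : GA) * a) -mulrA ha mulr0.
      - move=> r a; rewrite !inE => /eqP ha.
        by rewrite -[gmul a r]/((a : GA) * r) -mulrA -e_central mulrA ha mul0r.
    apply/subsetP => _ /imsetP[h hH ->]; rewrite inE.
    by rewrite -[gelt F h - gone F gT]/(ge h - 1) mulrBl mul1r geH_e // subrr.
  by rewrite inE => /eqP.
move=> ce I hI sub.
have -> : c = - (n%:R : F)^-1 *: \sum_(h in H) c * (ge h - 1).
  under eq_bigr do rewrite mulrBr mulr1.
  rewrite sumrB -mulr_sumr -/eH eH_e -scalerAr ce scaler0 sub0r.
  rewrite sumr_const -scaler_nat scaleNr scalerN opprK scalerA.
  by rewrite mulVf ?nF // scale1r.
apply: lidZ; first by case: hI.
apply: lid_sum; first by case: hI.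
move=> h hH; apply: lidM; first by case: hI.
apply: (subsetP sub); apply/imsetP; by exists h.
Qed.

Lemma augidE (a : GA) : in_aug_ideal a <-> aug a = 0.
Proof.
split.
  move=> ha.
  have: a \in [set a : galg F gT | @aug F gT a == 0].
    apply: ha.
      split; first split.
      - by rewrite inE aug0.
      split.
      - move=> u v; rewrite !inE => /eqP hu /eqP hv.
        by rewrite -[u + v]/((u : GA) + v) augD hu hv addr0.
      - move=> r u; rewrite !inE => /eqP hu.
        by rewrite -[gmul r u]/((r : GA) * u) augM hu mulr0.
      - move=> r u; rewrite !inE => /eqP hu.
        by rewrite -[gmul u r]/((u : GA) * r) augM hu mul0r.
    apply/subsetP => _ /imsetP[h hH ->]; rewrite inE.
    by rewrite -[gelt F h - gone F gT]/(ge h - 1) augB aug_ge aug1 subrr.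
  by rewrite inE => /eqP.
move=> ca I hI sub.
have -> : a = \sum_g a g *: (ge g - 1).
  under eq_bigr do rewrite scalerBr.
  rewrite sumrB -gaexp -scaler_suml -[\sum_g a g]/(aug a) ca scale0r subr0 //.
apply: lid_sum; first by case: hI.
move=> g _; apply: lidZ; first by case: hI.
apply: (subsetP sub); apply/imsetP; by exists g.
Qed.


Lemma aug0_exp (a : GA) : aug a = 0 -> a = \sum_g a g *: (ge g - 1).
Proof.
move=> ca; under eq_bigr do rewrite scalerBr.
by rewrite sumrB -gaexp -scaler_suml -[\sum_g a g]/(aug a) ca scale0r subr0.
Qed.

Lemma exists_max (I : {set galg F gT}) : is_left_ideal I -> I != setT ->
  exists M, is_maximal_left_ideal M /\ I \subset M.
Proof.
move: {2}#|~: I| (leqnn #|~: I|) => N.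
elim: N I => [|N IH] I hle hI nT.
  have: ~: I == set0 by rewrite -cards_eq0 -leqn0.
  by move/eqP/(congr1 (@setC _)); rewrite setCK setC0 => E; move: nT; rewrite E eqxx.
case: (Classical_Prop.classic (is_maximal_left_ideal I)) => [mI|nmI].
  by exists I; split => //.
have [I' [hI' [sub [neq1 neq2]]]] : exists I', is_left_ideal I' /\ I \subset I' /\ I' <> I /\ I' <> setT.
  apply: Classical_Prop.NNPP => nex; apply: nmI; split => //; split => // I' hI' sub.
  case: (Classical_Prop.classic (I' = I)) => [->|n1]; first by left.
  case: (Classical_Prop.classic (I' = setT)) => [->|n2]; first by right.
  by exfalso; apply: nex; exists I'.
have pr : I \proper I' by rewrite properEneq sub andbT; apply/eqP => E; apply: neq1; rewrite E.
have lt : (#|~: I'| < #|~: I|)%N by apply: proper_card; rewrite properC.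
have le' : (#|~: I'| <= N)%N by rewrite -ltnS (leq_trans lt hle).
have [M [mM sM]] := IH I' le' hI' (introN eqP neq2).
by exists M; split => //; apply: subset_trans sM.
Qed.

Lemma inv_nil3 (v : GA) : v ^+ 3 = 0 -> (1 + v + v * v) * (1 - v) = 1.
Proof.
move=> h; rewrite !mulrDl !mulrBr !mul1r !mulr1 !addrA !subrK.
by rewrite -expr2 -exprSr h subr0.
Qed.

Lemma jac_nil (w : GA) : (forall r : GA, (r * w) ^+ 3 = 0) -> in_jacobson w.
Proof.
move=> hw M [hM [nT mx]]; apply/negPn/negP => wM.
pose I' := [set z : galg F gT | [exists m0 : galg F gT, [exists r : GA, (m0 \in M) && ((z : GA) == m0 + r * w)]]].
have hI' : is_left_ideal I'.
  split.
    rewrite inE; apply/existsP; exists (0 : GA); apply/existsP; exists 0.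
    by rewrite (lid0 hM) mul0r addr0 /=; apply/eqP.
  split.
    move=> a b; rewrite !inE => /existsP[m0 /existsP[r /andP[m0M /eqP ->]]].
    move=> /existsP[m1 /existsP[s /andP[m1M /eqP ->]]].
    apply/existsP; exists ((m0 : GA) + m1); apply/existsP; exists (r + s).
    rewrite (lidD hM) //= mulrDl; apply/eqP.
    by rewrite -[_ + _ + (_ + _)]/((m0 : GA) + _ + (m1 + _)) addrACA.
  move=> a b; rewrite !inE => /existsP[m0 /existsP[r /andP[m0M /eqP ->]]].
  apply/existsP; exists ((a : GA) * m0); apply/existsP; exists ((a : GA) * r).
  rewrite (lidM _ hM) //=; apply/eqP; rewrite -[gmul a _]/((a : GA) * ((m0 : GA) + r * w)). by rewrite mulrDr mulrA.
have sub : M \subset I'.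
  apply/subsetP => z zM; rewrite inE; apply/existsP; exists z; apply/existsP; exists 0.
  by rewrite zM mul0r addr0 /=; apply/eqP.
case: (mx I' hI' sub) => E.
  have : w \in I'.
    rewrite inE; apply/existsP; exists 0; apply/existsP; exists 1.
    by rewrite (lid0 hM) mul1r add0r /=; apply/eqP.
  by rewrite E (negbTE wM).
have : (1 : GA) \in I' by rewrite E inE.
rewrite inE => /existsP[m0 /existsP[r /andP[m0M /eqP E1]]].
have m0E : (m0 : GA) = 1 - r * w by rewrite E1 addrK.
have := inv_nil3 (hw r); rewrite -m0E => E2.
have : (1 : GA) \in M by rewrite -E2; apply: lidM.
by move/(lid1 hM) => ET; move: nT; rewrite ET eqxx.
Qed.

Local Notation Y := (ge y).

Lemma Y3 : Y ^+ 3 = 1.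
Proof. by rewrite geX y3. Qed.

Lemma Ym1 : (Y - 1) ^+ 3 = 0.
Proof.
have pcA : 3%N \in [pchar GA] by rewrite (pchar_lalg GA).
have := pFrobenius_autB_comm pcA (commr1 Y).
rewrite !pFrobenius_autE expr1n Y3 subrr; exact.
Qed.

Lemma gee g : exists j, ge g * e = Y ^+ j * e.
Proof.
have [h [j [hH ->]]] := Gdec gen xy g.
exists j; rewrite -geM -geX -mulrA -e_central mulrA geH_e //.
Qed.

Lemma commZ c (q : GA) : GRing.comm q Y -> GRing.comm (c *: q) Y.
Proof. by move=> cq; rewrite /GRing.comm -scalerAl -scalerAr cq. Qed.

Lemma Pclaim (s : GA) : exists q, GRing.comm q Y /\ s * e = q * e.
Proof.
rewrite (gaexp s) mulr_suml.
apply: (big_ind (fun v : GA => exists q, GRing.comm q Y /\ v = q * e)).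
- by exists 0; rewrite mul0r; split => //; exact/commr_sym/commr0.
- move=> u v [q1 [c1 ->]] [q2 [c2 ->]]; exists (q1 + q2); rewrite mulrDl; split => //.
  exact/commr_sym/commrD; apply: commr_sym.
- move=> g _; have [j hj] := gee g; exists (s g *: Y ^+ j); split.
    by apply: commZ; exact/commr_sym/commrX.
  by rewrite -!scalerAl hj.
Qed.

Definition Qp (w : GA) := exists q : GA, GRing.comm q Y /\ w = q * (Y - 1) * e.

Lemma Q_mul r w : Qp w -> Qp (r * w).
Proof.
move=> [q [cq ->]]; have [q' [cq' hq']] := Pclaim (r * q).
exists q'; split => //.
by rewrite -!mulrA -e_central !mulrA hq' -mulrA e_central mulrA.
Qed.

Lemma Q_nil w : Qp w -> w ^+ 3 = 0.
Proof.
move=> [q [cq ->]].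
have c1 : GRing.comm (q * (Y - 1)) e by rewrite /GRing.comm e_central.
have c2 : GRing.comm q (Y - 1) by apply: commrB => //; exact: commr1.
by rewrite exprMn_comm // exprMn_comm // Ym1 mulr0 mul0r.
Qed.

Lemma Q_ae a : aug a = 0 -> Qp (a * e).
Proof.
move/aug0_exp => ->; rewrite mulr_suml.
apply: (big_ind Qp).
- by exists 0; rewrite !mul0r; split => //; exact/commr_sym/commr0.
- move=> u v [q1 [c1 ->]] [q2 [c2 ->]]; exists (q1 + q2); rewrite !mulrDl; split => //.
  exact/commr_sym/commrD; apply: commr_sym.
- move=> g _; have [j hj] := gee g.
  exists (a g *: \sum_(i < j) Y ^+ i); split.
    apply: commZ; apply/commr_sym/commr_sum => i _; exact: commrX.
  rewrite -scalerAl mulrBl hj mul1r -[X in _ - X]mul1r -mulrBl subrX1 -!scalerAl.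
  congr (_ *: _); congr (_ * _).
  have := @commr_sum _ _ (index_enum 'I_j) (fun _ => true) (fun i : 'I_j => Y ^+ i) (Y - 1); apply => i _; apply: commrX; apply/commr_sym/commrB; [exact: commr_refl | exact: commr1].
Qed.

Lemma ae_jac a : aug a = 0 -> in_jacobson (a * e).
Proof. move=> ca; apply: jac_nil => r; apply: Q_nil; apply: Q_mul; exact: Q_ae. Qed.


Local Open Scope group_scope.
Definition Rs : {set gT} :=
  [set h in H | (h != 1) && [forall u in <[y]>, (enum_rank h <= enum_rank (h ^ u)%g)%N]].
Local Close Scope group_scope.

Lemma commH h h' : h \in H -> h' \in H -> (h * h' = h' * h)%g.
Proof. by move=> /cycleP[i ->] /cycleP[j ->]; rewrite -!expgD addnC. Qed.

Lemma yNH u : u \in <[y]>%g -> u \in 'N(H)%g.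
Proof. move=> _; exact: (GN gen xy). Qed.

Lemma orbit_count (h' : gT) :
  \sum_(u in <[y]>%g) (if (h' ^ u)%g \in Rs then ge h' else 0)
  = if (h' \in H) && (h' != 1%g) then ge h' else 0.
Proof.
case: ifP => [/andP[hH n1]|nh]; last first.
  apply: big1 => u uy; case: ifP => // /setIdP[hu /andP[nu _]].
  move: nh; rewrite -(memJ_norm h' (yNH uy)) hu /=.
  by move: nu; rewrite conjg_eq1 => ->.
pose u0 := [arg min_(u < 1%g in <[y]>%g) (enum_rank (h' ^ u)%g : nat)].
have [u0y u0min] : u0 \in <[y]>%g /\ forall u, u \in <[y]>%g -> (enum_rank (h' ^ u0)%g <= enum_rank (h' ^ u)%g)%N.
  rewrite /u0; case: arg_minnP; first exact: group1.
  by move=> u uy umin; split.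
have u0R : (h' ^ u0)%g \in Rs.
  rewrite inE memJ_norm ?yNH // hH conjg_eq1 n1 /=.
  apply/forallP => w; apply/implyP => wy; rewrite -conjgM; apply: u0min.
  exact: groupM.
have uniq : forall u, u \in <[y]>%g -> (h' ^ u)%g \in Rs -> u = u0.
  move=> u uy; rewrite inE => /andP[_ /andP[_ /forallP/(_ (u^-1 * u0)%g)]].
  rewrite groupM ?groupV //= -conjgM mulKVg => le1.
  have := u0min u uy => le2.
  have eqr : enum_rank (h' ^ u)%g = enum_rank (h' ^ u0)%g.
    by apply: val_inj; apply/eqP; rewrite eqn_leq le1 le2.
  have eqc := enum_rank_inj eqr.
  have : (h' ^ (u * u0^-1))%g = h' by rewrite conjgM eqc -conjgM mulgV conjg1.
  have uu0 : (u * u0^-1)%g \in <[y]>%g by rewrite groupM ?groupV.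
  move/(fpfu cop xm y3 xy uu0 hH)/(_ n1).
  by move=> E; apply/eqP; rewrite eq_mulgV1 E.
rewrite (bigD1 u0) //= u0R big1 ?addr0 // => u /andP[uy nu].
case: ifP => // uR; by move: nu; rewrite (uniq u uy uR) eqxx.
Qed.

Lemma orbit_sum :
  \sum_(u in <[y]>%g) ge u * (\sum_(h in Rs) ge h) * ge u^-1 = eH - 1.
Proof.
transitivity (\sum_(u in <[y]>%g) \sum_h' (if (h' ^ u)%g \in Rs then ge h' else 0)).
  apply: eq_bigr => u uy; rewrite mulr_sumr mulr_suml -big_mkcond /=.
  rewrite (reindex_inj (conjg_inj u)) /=; apply: eq_bigr => h _.
  by rewrite !geM conjgE !mulgA mulgV mul1g mulgK.
rewrite exchange_big /=.
rewrite (eq_bigr _ (fun h' _ => orbit_count h')) -big_mkcond /=.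
by rewrite /eH [in RHS](bigD1 1%g) //= -[ge 1%g]/(1 : GA) addrC addrK.
Qed.

Definition d : GA := - (n%:R : F)^-1 *: \sum_(h in Rs) ge h.

Lemma d_comm h : h \in H -> ge h * d = d * ge h.
Proof.
move=> hH; rewrite /d -scalerAr -scalerAl mulr_sumr mulr_suml; congr (_ *: _).
apply: eq_bigr => h' /setIdP[h'H _]; by rewrite !geM commH.
Qed.

Lemma d_orbit : \sum_(u in <[y]>%g) ge u * d * ge u^-1 = - (n%:R : F)^-1 *: (eH - 1).
Proof.
rewrite -orbit_sum scaler_sumr; apply: eq_bigr => u _.
by rewrite /d -scalerAr -scalerAl.
Qed.


Section Semi.
Variable b : GA.
Hypothesis be : b * e = 0.

Definition Lb : {vspace GA} := limg (linfun (GRing.mulr_fun b idfun)).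

Lemma Lb_mem v : reflect (exists r, v = r * b) (v \in Lb).
Proof.
apply: (iffP memv_imgP) => [[u _ ->]|[r ->]]; first by exists u; rewrite lfunE.
by exists r; rewrite ?memvf // lfunE.
Qed.

Lemma Lb_mul r v : v \in Lb -> r * v \in Lb.
Proof. by move/Lb_mem=> [s ->]; apply/Lb_mem; exists (r * s); rewrite mulrA. Qed.

Local Notation p := (projv Lb).

Definition P (v : GA) : GA :=
  \sum_(u in <[y]>%g) \sum_(h in H) ge (u * h)%g * d * p (ge (u * h)^-1%g * v).

Lemma PD v w : P (v + w) = P v + P w.
Proof.
rewrite /P -big_split; apply: eq_bigr => u _; rewrite -big_split; apply: eq_bigr => h _.
by rewrite mulrDr linearD mulrDr.
Qed.

Lemma PZ c v : P (c *: v) = c *: P v.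
Proof.
rewrite /P scaler_sumr; apply: eq_bigr => u _; rewrite scaler_sumr; apply: eq_bigr => h _.
move: (ge (u * h)%g * d) (ge (u * h)^-1%g) => z z'.
by rewrite -scalerAr linearZ scalerAr.
Qed.

Lemma P0 : P 0 = 0.
Proof. by have := PZ 0 0; rewrite !scale0r. Qed.

Lemma P_sum (I : Type) (r : seq I) (Q : pred I) (f : I -> GA) :
  P (\sum_(i <- r | Q i) f i) = \sum_(i <- r | Q i) P (f i).
Proof. exact: (big_morph P PD P0). Qed.

Lemma PH h v : h \in H -> P (ge h * v) = ge h * P v.
Proof.
move=> hH; rewrite /P mulr_sumr; apply: eq_bigr => u uy; rewrite mulr_sumr.
have sH : (h ^ u)%g \in H by rewrite memJ_norm // (GN gen xy).
rewrite (reindex_inj (mulgI (h ^ u)%g)) /=.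
apply: eq_big => [h'|h' _]; first by rewrite groupMl.
rewrite mulrA !geM mulrA !mulrA geM.
have e1 : (u * (h ^ u * h'))%g = (h * (u * h'))%g.
  by rewrite conjgE !mulgA mulgV mul1g.
by rewrite e1 invMg -mulgA mulVg mulg1.
Qed.

Lemma Py v : P (Y * v) = Y * P v.
Proof.
rewrite /P mulr_sumr (reindex_inj (mulgI y)) /=.
apply: eq_big => [u|u _]; first by rewrite groupMl // cycle_id.
rewrite mulr_sumr; apply: eq_bigr => h _.
rewrite mulrA geM !mulrA geM.
by rewrite -(mulgA y u h) invMg -mulgA mulVg mulg1 !mulgA.
Qed.

Lemma PYX j v : P (Y ^+ j * v) = Y ^+ j * P v.
Proof.
elim: j v => [|j IH] v; first by rewrite !expr0 !mul1r.
by rewrite exprS -mulrA Py IH mulrA.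
Qed.

Lemma Pge g v : P (ge g * v) = ge g * P v.
Proof.
have [h [j [hH ->]]] := Gdec gen xy g.
by rewrite -geM -geX -mulrA PH // PYX mulrA.
Qed.

Lemma P_left r v : P (r * v) = r * P v.
Proof.
rewrite {1 2}(gaexp r) mulr_suml mulr_suml P_sum; apply: eq_bigr => g _.
by rewrite -scalerAl PZ Pge scalerAl.
Qed.

Lemma P_mem v : P v \in Lb.
Proof.
rewrite /P; apply: memv_suml => u _; apply: memv_suml => h _.
apply: Lb_mul; exact: memv_proj.
Qed.

Lemma eH_comm (a : GA) : eH * a = a * eH.
Proof. by rewrite eH_e -scalerAl -scalerAr e_central. Qed.

Lemma P_in v : v \in Lb -> P v = v.
Proof.
move=> vL.
have ve : v * e = 0 by case/Lb_mem: vL => r ->; rewrite -mulrA be mulr0.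
transitivity (\sum_(u in <[y]>%g) (n%:R : F) *: (ge u * d * ge u^-1 * v)).
  apply: eq_bigr => u _.
  rewrite (eq_bigr (fun _ => ge u * d * ge u^-1 * v)) => [|h hH].
    by rewrite sumr_const -scaler_nat.
  rewrite projv_id; last by apply: Lb_mul.
  rewrite -geM -(mulrA (ge u)) d_comm // !mulrA -(mulrA _ (ge h)) geM.
  by rewrite invMg mulgA mulgV mul1g.
rewrite -scaler_sumr -mulr_suml d_orbit scalerAl scalerA mulrN mulfV ?nF //.
rewrite scaleN1r mulNr mulrBl mul1r opprB eH_comm eH_e -scalerAr ve scaler0 subr0 //.
Qed.

Definition eps := P 1.

Lemma vL_eps v : v \in Lb -> v = v * eps.
Proof. by move=> vL; rewrite /eps -P_left mulr1 P_in. Qed.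

Lemma b_in : b \in Lb.
Proof. by apply/Lb_mem; exists 1; rewrite mul1r. Qed.

End Semi.


Lemma semi (b : GA) : in_jacobson b -> b * e = 0 -> b = 0.
Proof.
move=> jb be.
have EL : eps b \in Lb b := P_mem b (1 : GA).
have bE : b = b * eps b := vL_eps be (b_in b).
have EE : eps b * eps b = eps b by rewrite -vL_eps.
have [r0 hr0] := Lb_mem b (eps b) EL.
case: (eqVneq (eps b) 0) => [E0|En0]; first by rewrite bE E0 mulr0.
exfalso.
pose M0 := [set z : galg F gT | [exists r : GA, (z : GA) == r * (1 - eps b)]].
have hM0 : is_left_ideal M0.
  split; first by rewrite inE; apply/existsP; exists 0; rewrite mul0r.
  split.
    move=> u v; rewrite !inE => /existsP[r /eqP ->] /existsP[s /eqP ->].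
    by apply/existsP; exists (r + s); rewrite mulrDl.
  move=> u v; rewrite !inE => /existsP[r /eqP ->].
  apply/existsP; exists ((u : GA) * r).
  by rewrite -[gmul u _]/((u : GA) * (r * (1 - eps b))) mulrA.
have nT : M0 != setT.
  apply/negP => /eqP ET.
  have : (1 : GA) \in M0 by rewrite ET inE.
  rewrite inE => /existsP[r /eqP h1].
  move: En0; rewrite -[eps b]mul1r h1 -mulrA mulrBl mul1r EE subrr mulr0 eqxx.
  by [].
have [Mx [mM sub]] := exists_max hM0 nT.
have bM : b \in Mx by apply: jb.
case: mM => hM [MnT _].
have EM : eps b \in Mx by rewrite hr0; apply: lidM.
have EM' : 1 - eps b \in Mx.
  by apply: (subsetP sub); rewrite inE; apply/existsP; exists 1; rewrite mul1r.
have : (1 : GA) \in Mx by rewrite -(subrK (eps b) 1); apply: lidD.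
by move/(lid1 hM) => ET; move: MnT; rewrite ET eqxx.
Qed.

Lemma aug_lid : is_left_ideal [set a : galg F gT | @aug F gT a == 0].
Proof.
split; first by rewrite inE aug0.
split.
- move=> u v; rewrite !inE => /eqP hu /eqP hv.
  by rewrite -[u + v]/((u : GA) + v) augD hu hv addr0.
- move=> r u; rewrite !inE => /eqP hu.
  by rewrite -[gmul r u]/((r : GA) * u) augM hu mulr0.
Qed.

Lemma aug_max : is_maximal_left_ideal [set a : galg F gT | @aug F gT a == 0].
Proof.
split; first exact: aug_lid.
split.
  apply/negP => /eqP E; have : (1 : GA) \in [set a : galg F gT | @aug F gT a == 0] by rewrite E inE.
  by rewrite inE aug1 oner_eq0.
move=> I' hI' sub.
case: (boolP (I' \subset [set a : galg F gT | @aug F gT a == 0])) => s.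
  by left; apply/eqP; rewrite eqEsubset s sub.
right; move/subsetPn: s => [u uI' uN]; rewrite inE in uN.
apply: (lid1 hI').
rewrite -(subrK ((aug u)^-1 *: (u : GA)) 1).
apply: lidD => //; last exact: lidZ.
apply: (subsetP sub); rewrite inE augB aug1 augZ mulVf ?subrr //.
Qed.

Lemma jac_aug (b : GA) : in_jacobson b -> aug b = 0.
Proof. by move=> jb; have := jb _ aug_max; rewrite inE => /eqP. Qed.

Lemma main_res :
  (forall a : galg F gT, in_aug_ideal a <->
     exists b c, in_jacobson b /\ in_aug_ideal_rel <[x]>%g c /\ a = b + c)
  /\ (forall a : galg F gT, in_jacobson a -> in_aug_ideal_rel <[x]>%g a -> a = 0).
Proof.
split; last by move=> a ja /relE ra; apply: semi.
move=> a; split.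
  move/augidE => ca; exists ((a : GA) * e), ((a : GA) - (a : GA) * e); split.
    exact: ae_jac.
  split; last first.
    rewrite -[_ + _]/((a : GA) * e + ((a : GA) - (a : GA) * e)).
    by rewrite addrCA subrr addr0.
  by apply: (proj2 (relE _)); rewrite mulrBl -mulrA ee subrr.
move=> [b [c [jb [/relE hc ->]]]]; apply/augidE.
rewrite -[b + c]/((b : GA) + c) augD (jac_aug jb) add0r.
have := congr1 (@aug F gT) hc; by rewrite augM aug_e mulr1 aug0.
Qed.

End Main.

Theorem proposition3p9 (F : finFieldType) (gT : finGroupType)
  (k t : nat) (x y : gT) :
  3%N \in [pchar F] ->
  (t ^ 3 = 1 %[mod 3 * k + 1])%N ->
  coprime (3 * k + 1) (t - 1) ->
  <<[set x; y]>>%g = [set: gT] ->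
  (x ^+ (3 * k + 1))%g = 1%g ->
  (y ^+ 3)%g = 1%g ->
  (x ^ y)%g = (x ^+ t)%g ->
  #|gT| = (3 * (3 * k + 1))%N ->
  (forall a : galg F gT, in_aug_ideal a <->
     exists b c, in_jacobson b /\ in_aug_ideal_rel <[x]>%g c /\ a = b + c)
  /\ (forall a : galg F gT, in_jacobson a -> in_aug_ideal_rel <[x]>%g a -> a = 0).
Proof.
move=> pc _ cop gen xm y3 xy _.
exact: (main_res pc cop gen xm y3 xy).
Qed.
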